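(* Let $A$ be a real symmetric $n\times n$ matrix such that the graph $\mathcal{G}(A)$ is connected and all nonzero off-diagonal entries of $A$ have the same sign. Let $S\subseteq\{1,\dots,n\}$ and $Z=\{{\bf e}_j : j\in S\}$. Then the real linear span of $P(A,Z)$ is contained in $\mathcal{L}(A,Z)$.
   Context: ${\bf e}_j$ is the $j$th standard basis vector of $\mathbb{R}^n$. For a real symmetric $n\times n$ matrix $A=[a_{kj}]$, $\mathcal{G}(A)$ is the simple graph on $\{1,\dots,n\}$ with edges $\{kj: a_{kj}\neq0,\ k\neq j\}$. For $Z=\{{\bf z}_1,\dots,{\bf z}_s\}\subset\mathbb{R}^n$: $P(A,Z):=\{A^m{\bf z}_k{\bf z}_j^TA^\ell : 1\le k,j\le s,\ 0\le m,\ell\le n-1\}$, and $\mathcal{L}(A,Z)$ is the real Lie algebra generated by $A,{\bf z}_1{\bf z}_1^T,\dots,{\bf z}_s{\bf z}_s^T$, i.e. the smallest real vector space of matrices containing these and closed under the commutator $[X,Y]=XY-YX$. *)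

(* Defs.v *)
From HB Require Import structures.
From mathcomp Require Import all_boot all_order all_algebra.
From mathcomp Require Import reals.
Set Implicit Arguments. Unset Strict Implicit. Unset Printing Implicit Defensive.
Import Order.TTheory GRing.Theory Num.Theory.
Local Open Scope ring_scope.

Definition evec {R : realType} {n : nat} (j : 'I_n) : 'cV[R]_n := delta_mx j 0.

Definition gadj {R : realType} {n : nat} (A : 'M[R]_n) : rel 'I_n :=
  fun k j => (k != j) && (A k j != 0).

Definition graph_connected {R : realType} {n : nat} (A : 'M[R]_n) : Prop :=
  forall k j : 'I_n, connect (gadj A) k j.

Definition offdiag_same_sign {R : realType} {n : nat} (A : 'M[R]_n) : Prop :=
  (forall k j : 'I_n, k != j -> A k j != 0 -> 0 < A k j) \/
  (forall k j : 'I_n, k != j -> A k j != 0 -> A k j < 0).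

Definition comm_mx {R : realType} {n : nat} (X Y : 'M[R]_n) : 'M[R]_n :=
  X *m Y - Y *m X.

Inductive in_span {R : realType} {n : nat} (G : 'M[R]_n -> Prop) : 'M[R]_n -> Prop :=
  | span0 : in_span G 0
  | span_gen X : G X -> in_span G X
  | spanD X Y : in_span G X -> in_span G Y -> in_span G (X + Y)
  | spanZ (c : R) X : in_span G X -> in_span G (c *: X).

Inductive in_lie {R : realType} {n : nat} (G : 'M[R]_n -> Prop) : 'M[R]_n -> Prop :=
  | lie0 : in_lie G 0
  | lie_gen X : G X -> in_lie G X
  | lieD X Y : in_lie G X -> in_lie G Y -> in_lie G (X + Y)
  | lieZ (c : R) X : in_lie G X -> in_lie G (c *: X)
  | lie_comm X Y : in_lie G X -> in_lie G Y -> in_lie G (comm_mx X Y).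

Definition Zset {R : realType} {n : nat} (S : {set 'I_n}) : 'cV[R]_n -> Prop :=
  fun z => exists2 j, j \in S & z = evec j.

Definition Pset {R : realType} {n : nat} (A : 'M[R]_n) (Z : 'cV[R]_n -> Prop)
  : 'M[R]_n -> Prop :=
  fun X => exists zk zj (m l : nat),
    [/\ Z zk, Z zj, (m <= n - 1)%N, (l <= n - 1)%N &
        X = (A ^+ m) *m zk *m zj^T *m (A ^+ l)].

(* Generators of L(A,Z): A and z z^T for z in Z. *)
Definition Lgens {R : realType} {n : nat} (A : 'M[R]_n) (Z : 'cV[R]_n -> Prop)
  : 'M[R]_n -> Prop :=
  fun X => X = A \/ exists2 z, Z z & X = z *m z^T.

(* Main.v *)
Require Import Defs.
From HB Require Import structures.
From mathcomp Require Import all_boot all_order all_algebra.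
From mathcomp Require Import reals ring lra.
Import Order.TTheory GRing.Theory Num.Theory.
Set Implicit Arguments. Unset Strict Implicit. Unset Printing Implicit Defensive.
Local Open Scope ring_scope.

Lemma DM (R : realType) (n : nat) (a b : 'I_n) (M : 'M[R]_n) i l :
  (delta_mx a b *m M) i l = (i == a)%:R * M b l.
Proof.
rewrite !mxE (bigD1 b) //= big1 ?addr0 => [|m /negbTE mb]; rewrite mxE ?mb ?eqxx.
  by rewrite andbT.
by rewrite andbF mul0r.
Qed.

Lemma MD (R : realType) (n : nat) (c d : 'I_n) (M : 'M[R]_n) i k :
  (M *m delta_mx c d) i k = M i c * (k == d)%:R.
Proof.
rewrite !mxE (bigD1 c) //= big1 ?addr0 => [|m /negbTE mb]; rewrite mxE ?mb ?eqxx //.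
by rewrite mulr0.
Qed.

Lemma DMD (R : realType) (n : nat) (a b c d : 'I_n) (M : 'M[R]_n) :
  delta_mx a b *m M *m delta_mx c d = M b c *: delta_mx a d.
Proof.
apply/matrixP=> i k; rewrite MD DM !mxE.
by case: (i == a); case: (k == d); rewrite /= ?mulr1 ?mul1r ?mulr0 ?mul0r.
Qed.

Lemma ring_id (T : pzRingType) (e x : T) : e * e = e ->
  (e*x*(1-e)) *+ 2 = e*(e*x - x*e) - (e*x - x*e)*e + (e*x - x*e).
Proof.
move=> ee.
rewrite !(mulrBr, mulrBl) mulr1 !mulrA ee -(mulrA x) ee.
rewrite mulr2n.
set a := e * x; set b := a * e; set c := x * e.
rewrite opprB -[RHS]addrA; congr (_ + _); by rewrite addrC addrA subrK.
Qed.


Lemma lieB (R : realType) n (G : 'M[R]_n -> Prop) X Y :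
  in_lie G X -> in_lie G Y -> in_lie G (X - Y).
Proof. move=> hX hY; rewrite -scaleN1r; exact: lieD hX (lieZ _ hY). Qed.

Lemma lieC (R : realType) n (G : 'M[R]_n -> Prop) X Y :
  in_lie G X -> in_lie G Y -> in_lie G (X *m Y - Y *m X).
Proof. exact: lie_comm. Qed.

Lemma lie_eq (R : realType) n (G : 'M[R]_n -> Prop) X Y :
  X = Y -> in_lie G X -> in_lie G Y.
Proof. by move=> ->. Qed.

Lemma trL (R : realType) n (G : 'M[R]_n -> Prop) :
  (forall X, G X -> X^T = X) -> forall X, in_lie G X -> in_lie G X^T.
Proof.
move=> hG X; elim=> {X}.
- rewrite trmx0; exact: lie0.
- by move=> X gX; rewrite hG //; apply: lie_gen.
- by move=> X Y _ hX _ hY; rewrite linearD; apply: lieD.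
- by move=> c X _ hX; rewrite linearZ; apply: lieZ.
- move=> X Y _ hX _ hY; rewrite /comm_mx linearB /= !trmx_mul.
  exact: lieC.
Qed.

Lemma EXF (R : realType) n (G : 'M[R]_n -> Prop) E X :
  E *m E = E -> in_lie G E -> in_lie G X -> in_lie G (E *m X *m (1%:M - E)).
Proof.
move=> ee hE hX.
have hY : in_lie G (E *m X - X *m E) by exact: lieC.
have hZ := lieD (lieC hE hY) hY.
have h2 : (2%:R : R) != 0 by rewrite pnatr_eq0.
apply: (lie_eq _ (lieZ (2%:R^-1) hZ)).
move: (ring_id X ee); rewrite !mulmxE => <-.
by rewrite -scaler_nat scalerA mulVf // scale1r.
Qed.

Definition polyA (R : realType) n (A : 'M[R]_n) := in_span (fun Q => exists m, Q = A ^+ m).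

Lemma genE (R : realType) n (A : 'M[R]_n) (S : {set 'I_n}) j : j \in S ->
  in_lie (Lgens A (Zset S)) (delta_mx j j).
Proof.
move=> jS; apply: lie_gen; right; exists (evec j); first by exists j.
by rewrite /evec trmx_delta mul_delta_mx.
Qed.

Lemma genA (R : realType) n (A : 'M[R]_n) (S : {set 'I_n}) : in_lie (Lgens A (Zset S)) A.
Proof. by apply: lie_gen; left. Qed.

Lemma trLg (R : realType) n (A : 'M[R]_n) (S : {set 'I_n}) : A^T = A -> forall X,
  in_lie (Lgens A (Zset S)) X -> in_lie (Lgens A (Zset S)) X^T.
Proof.
move=> hA; apply: trL; move=> X [->//|[z _ ->]].
by rewrite trmx_mul trmxK.
Qed.

Lemma trpow (R : realType) n (A : 'M[R]_n) m : A^T = A -> (A ^+ m)^T = A ^+ m.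
Proof.
move=> hA; elim: m => [|m IH]; first by rewrite expr0 trmx1.
by rewrite exprS -mulmxE trmx_mul IH hA !mulmxE -exprSr exprS.
Qed.

Lemma polyA_tr (R : realType) n (A : 'M[R]_n) Q : A^T = A -> polyA A Q -> Q^T = Q.
Proof.
move=> hA; elim=> {Q}.
- by rewrite trmx0.
- by move=> Q [m ->]; rewrite trpow.
- by move=> X Y _ hX _ hY; rewrite linearD /= hX hY.
- by move=> c X _ hX; rewrite linearZ /= hX.
Qed.

Lemma polyA_mul (R : realType) n (A : 'M[R]_n) Q : polyA A Q -> polyA A (A *m Q).
Proof.
elim=> {Q}.
- rewrite mulmx0; exact: span0.
- by move=> Q [m ->]; apply: span_gen; exists m.+1; rewrite exprS mulmxE.
- by move=> X Y _ hX _ hY; rewrite mulmxDr; apply: spanD.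
- by move=> c X _ hX; rewrite -scalemxAr; apply: spanZ.
Qed.

Lemma polyA_pow (R : realType) n (A : 'M[R]_n) m : polyA A (A ^+ m).
Proof. by apply: span_gen; exists m. Qed.

Lemma C1 (R : realType) n (A : 'M[R]_n) (S : {set 'I_n}) j m : A^T = A -> j \in S ->
  in_lie (Lgens A (Zset S)) (delta_mx j j *m A ^+ m).
Proof.
move=> hA jS; set E := delta_mx j j.
have hE := genE A jS.
have ee : E *m E = E by rewrite mul_delta_mx.
elim: m => [|m IH]; first by rewrite expr0 mulmx1.
set X := E *m A ^+ m in IH *.
have -> : E *m A ^+ m.+1 = X *m A by rewrite exprSr -mulmxE mulmxA.
have -> : X *m A = X *m A *m E + X *m A *m (1%:M - E).
  by rewrite mulmxBr mulmx1 addrC subrK.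
apply: lieD.
  have -> : X *m A *m E = (A ^+ m *m A) j j *: E.
    by rewrite /X -(mulmxA E) DMD.
  exact: lieZ.
have h1 := EXF ee hE (lieC IH (genA A S)).
have h2 := EXF ee hE IH.
apply: (lie_eq _ (lieD h1 (lieZ (A j j) h2))).
have EX : E *m X = X by rewrite /X mulmxA ee.
have EAX : E *m A *m X = A j j *: X by rewrite /X mulmxA DMD -scalemxAl.
clearbody X.
rewrite !mulmxBr !mulmxBl !mulmx1 !mulmxA EX EAX -!scalemxAl.
clear IH h1 h2 EX EAX.
move: (X *m A *m E) => P1; move: (X *m A) => P2; move: (X *m E) => P3; move: X => P4.
by apply/matrixP=> a b; rewrite !mxE; ring.
Qed.

Lemma DMDl (R : realType) (n : nat) (a b c d : 'I_n) (P M : 'M[R]_n) :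
  P *m delta_mx a b *m M *m delta_mx c d = M b c *: (P *m delta_mx a d).
Proof. by rewrite -!mulmxA (mulmxA (delta_mx a b)) DMD -scalemxAr. Qed.

Lemma C1p (R : realType) n (A : 'M[R]_n) (S : {set 'I_n}) j Q : A^T = A -> j \in S ->
  polyA A Q -> in_lie (Lgens A (Zset S)) (delta_mx j j *m Q).
Proof.
move=> hA jS; elim=> {Q}.
- rewrite mulmx0; exact: lie0.
- by move=> Q [m ->]; exact: C1.
- by move=> X Y _ hX _ hY; rewrite mulmxDr; apply: lieD.
- by move=> c X _ hX; rewrite -scalemxAr; apply: lieZ.
Qed.

Lemma C1T (R : realType) n (A : 'M[R]_n) (S : {set 'I_n}) j Q : A^T = A -> j \in S ->
  polyA A Q -> in_lie (Lgens A (Zset S)) (Q *m delta_mx j j).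
Proof.
move=> hA jS hQ; have := trLg hA (C1p hA jS hQ).
by rewrite trmx_mul trmx_delta (polyA_tr hA hQ).
Qed.

Lemma C2 (R : realType) n (A : 'M[R]_n) (S : {set 'I_n}) j P Q : A^T = A -> j \in S ->
  polyA A P -> polyA A Q -> in_lie (Lgens A (Zset S)) (P *m delta_mx j j *m Q).
Proof.
move=> hA jS hP hQ.
have hC := lieC (C1T hA jS hP) (C1p hA jS hQ).
have hE := genE A jS.
apply: (lie_eq _ (lieD hC (lieZ ((Q *m P) j j) hE))).
rewrite !mulmxA -(mulmxA P) mul_delta_mx -(mulmxA _ Q P) DMD.
by rewrite subrK.
Qed.


Lemma solve1 (R : realType) n (U V E : 'M[R]_n) (q : R) : q != 0 ->
  (q * 2)^-1 *: (q *: U - q *: V + (q *: U - q *: (q *: E) - (q *: (q *: E) - q *: V)))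
   + q *: E = U.
Proof. by move=> hq; apply/matrixP=> a b; rewrite !mxE; field. Qed.

Lemma Ulem (R : realType) n (A : 'M[R]_n) (S : {set 'I_n}) j k Q0 : A^T = A ->
  j \in S -> k \in S -> polyA A Q0 -> Q0 j k != 0 ->
  in_lie (Lgens A (Zset S)) (Q0 *m delta_mx k j).
Proof.
move=> hA jS kS hQ hq.
have qs : Q0 k j = Q0 j k by rewrite -{1}(polyA_tr hA hQ) mxE.
have hT := C2 hA kS hQ hQ.
have hE := genE A jS.
have hY := lieC hT hE.
have hZ := lieC hY hE.
apply: (lie_eq _ (lieD (lieZ (Q0 j k * 2)^-1 (lieD hY hZ)) (lieZ (Q0 j k) hE))).
have TE : Q0 *m delta_mx k k *m Q0 *m delta_mx j j = Q0 j k *: (Q0 *m delta_mx k j)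
  by rewrite DMDl qs.
have ET : delta_mx j j *m (Q0 *m delta_mx k k *m Q0) = Q0 j k *: (delta_mx j k *m Q0)
  by rewrite !mulmxA DMD -scalemxAl.
have UE : Q0 *m delta_mx k j *m delta_mx j j = Q0 *m delta_mx k j
  by rewrite -mulmxA mul_delta_mx.
have VE : delta_mx j k *m Q0 *m delta_mx j j = Q0 j k *: delta_mx j j
  by rewrite DMD qs.
have EU : delta_mx j j *m (Q0 *m delta_mx k j) = Q0 j k *: delta_mx j j
  by rewrite mulmxA DMD.
have EV : delta_mx j j *m (delta_mx j k *m Q0) = delta_mx j k *m Q0
  by rewrite mulmxA mul_delta_mx.
rewrite TE ET !mulmxBl !mulmxBr -!scalemxAl -!scalemxAr UE VE EU EV.
exact: solve1.
Qed.

Lemma solve2 (R : realType) n (W V : 'M[R]_n) (q c : R) : q != 0 ->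
  q^-1 *: (q *: W - c *: V + c *: V) = W.
Proof. by move=> hq; apply/matrixP=> a b; rewrite !mxE; field. Qed.

Lemma cross (R : realType) n (A : 'M[R]_n) (S : {set 'I_n}) j k Q0 P Q : A^T = A ->
  j \in S -> k \in S -> polyA A Q0 -> Q0 j k != 0 -> polyA A P -> polyA A Q ->
  in_lie (Lgens A (Zset S)) (P *m delta_mx k j *m Q).
Proof.
move=> hA jS kS hQ0 hq hP hQ.
have qs : Q0 k j = Q0 j k by rewrite -{1}(polyA_tr hA hQ0) mxE.
have hU := Ulem hA jS kS hQ0 hq.
have hV := trLg hA hU.
rewrite trmx_mul trmx_delta (polyA_tr hA hQ0) in hV.
have hW := C2 hA kS hP hQ0.
have hR := C1p hA jS hQ.
have hC := lieC hW hR.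
apply: (lie_eq _ (lieZ (Q0 j k)^-1 (lieD hC (lieZ ((Q *m P) j k) hV)))).
rewrite !mulmxA DMDl qs -scalemxAl -(mulmxA (delta_mx j j) Q P) DMD -scalemxAl.
exact: solve2.
Qed.

Lemma conn (R : realType) n (A : 'M[R]_n) (s : R) : A^T = A ->
  (forall a b, a != b -> A a b != 0 -> 0 < s * A a b) ->
  forall k j, connect (gadj A) k j -> exists Q, polyA A Q /\ Q j k != 0.
Proof.
move=> hA hs k j /connectP [p hp ->].
set c := \sum_i `|s * A i i|.
set N := s *: A + c%:M.
have Nge0 : forall a b, 0 <= N a b.
  move=> a b; rewrite !mxE; case: (eqVneq a b) => [->|ab].
    rewrite mulr1n.
    have : `|s * A b b| <= c.
      rewrite /c (bigD1 b) //= lerDl; exact: sumr_ge0.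
    move/lerNnormlW; lra.
  rewrite mulr0n addr0.
  case: (eqVneq (A a b) 0) => [->|nz]; first by rewrite mulr0.
  exact/ltW/hs.
have Npos : forall a b, a != b -> A a b != 0 -> 0 < N a b.
  by move=> a b ab nz; rewrite !mxE (negbTE ab) mulr0n addr0; apply: hs.
suff : forall x, path (gadj A) x p -> (exists Q, [/\ polyA A Q, forall i, 0 <= Q i k & 0 < Q x k]) ->
   (exists Q, [/\ polyA A Q, forall i, 0 <= Q i k & 0 < Q (last x p) k]).
  move=> H; have [|Q [hQ _ pos]] := H k hp; last by exists Q; split => //; rewrite gt_eqF.
  exists 1%:M; split.
  - exact: (polyA_pow A 0).
  - by move=> i; rewrite mxE ler0n.
  - by rewrite mxE eqxx ltr01.
clear hp; elim: p => [//|y p IH] x /= /andP [exy hp] [Q [hQ Qge Qx]].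
apply: (IH y hp).
exists (N *m Q); split.
- rewrite /N mulmxDl mul_scalar_mx -scalemxAl.
  by apply: spanD; apply: spanZ => //; apply: polyA_mul.
- move=> i; rewrite mxE; apply: sumr_ge0 => l _; apply: mulr_ge0 => //.
- rewrite mxE (bigD1 x) //=.
  have h1 : 0 < N y x * Q x k.
    apply: mulr_gt0 => //; move: exy => /andP [xy nz].
    apply: Npos; first by rewrite eq_sym.
    by rewrite -{1}hA mxE.
  have h2 : 0 <= \sum_(i | i != x) N y i * Q i k.
    by apply: sumr_ge0 => l _; apply: mulr_ge0.
  lra.
Qed.

Theorem lemma3p6 (R : realType) (n : nat) (A : 'M[R]_n) (S : {set 'I_n}) :
  A^T = A ->
  graph_connected A ->
  offdiag_same_sign A ->
  forall X : 'M[R]_n, in_span (Pset A (Zset S)) X -> in_lie (Lgens A (Zset S)) X.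
Proof.
move=> hA hc hsgn.
have [s hs] : exists s : R, forall a b, a != b -> A a b != 0 -> 0 < s * A a b.
  case: hsgn => h; [exists 1 | exists (-1)] => a b ab nz;
    [rewrite mul1r | rewrite mulN1r oppr_gt0]; exact: h.
move=> X; elim => {X}.
- exact: lie0.
- move=> X [zk [zj [m [l [[k kS ->] [j jS ->] _ _ ->]]]]].
  have [Q0 [hQ0 nz]] := conn hA hs (hc k j).
  rewrite /evec trmx_delta -(mulmxA (A ^+ m)) mul_delta_mx.
  exact: cross hA jS kS hQ0 nz (polyA_pow A m) (polyA_pow A l).
- by move=> X Y _ hX _ hY; apply: lieD.
- by move=> c X _ hX; apply: lieZ.
Qed.
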